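(* Let $(M,g,S)$, $p$, $u$ and $\varphi$ be as in the context, and let $\alpha_1$ be the subspace of $T_pM$ spanned by $u,Su,S^2u$. Then the vectors $$e_1=u,\qquad e_2=\frac{(-\cos\varphi)u+Su-(\cos\varphi)S^2u}{\sqrt{1-2\cos^2\varphi}},\qquad e_3=S^2u$$ form an orthonormal basis of $\alpha_1$ with respect to $g$.
   Context: $M$ is a 4-dimensional differentiable manifold with a positive definite metric $g$ and a tensor field $S$ of type $(1,1)$ whose components in some local coordinate system form the matrix with rows $(0,1,0,0)$, $(0,0,1,0)$, $(0,0,0,1)$, $(-1,0,0,0)$; hence $S^4=-\mathrm{id}$, and $g(Su,Sv)=g(u,v)$ for all vector fields $u,v$. Here $p\in M$ and $u\in T_pM$ is a unit vector (w.r.t. $g$) inducing an $S$-basis, i.e. $\{u,Su,S^2u,S^3u\}$ is a basis of $T_pM$, and $\varphi=\angle(u,Su)$ is the $g$-angle, so $\cos\varphi=g(u,Su)$. It is known that then $\angle(u,Su)=\angle(Su,S^2u)=\angle(S^2u,S^3u)=\pi-\angle(S^3u,u)$, $\angle(u,S^2u)=\angle(Su,S^3u)=\frac{\pi}{2}$, and $\frac{\pi}{4}<\varphi<\frac{3\pi}{4}$. *)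

(* Defs.v *)
From HB Require Import structures.
From mathcomp Require Import all_boot all_order all_algebra.
From mathcomp Require Import reals.
Set Implicit Arguments. Unset Strict Implicit. Unset Printing Implicit Defensive.
Import Order.TTheory GRing.Theory Num.Theory.
Local Open Scope ring_scope.

(* T_pM is identified with R^4 (column vectors) via the given local chart.
   S acts by the matrix whose rows are (0,1,0,0),(0,0,1,0),(0,0,0,1),(-1,0,0,0):
   (S v)_i = sum_j Smx i j * v_j. *)
Definition Smx (R : realType) : 'M[R]_4 :=
  \matrix_(i < 4, j < 4)
    (if (i : nat) == 3%N then (if (j : nat) == 0%N then -1 else 0)
     else if (j : nat) == i.+1 then 1 else 0).

Definition Sop (R : realType) (v : 'cV[R]_4) : 'cV[R]_4 := Smx R *m v.

(* the metric at p, given by its Gram matrix G in the chart *)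
Definition gform (R : realType) (G : 'M[R]_4) (v w : 'cV[R]_4) : R :=
  (v^T *m G *m w) 0 0.

Definition pos_def_metric (R : realType) (G : 'M[R]_4) : Prop :=
  G^T = G /\ forall v : 'cV[R]_4, v != 0 -> 0 < gform G v v.

Definition Sframe (R : realType) (u : 'cV[R]_4) : 'M[R]_4 :=
  \matrix_(i < 4) (iter i (@Sop R) u)^T.

Definition induces_Sbasis (R : realType) (u : 'cV[R]_4) : bool :=
  row_free (Sframe u).

(* matrix whose rows are u^T, (Su)^T, (S^2u)^T : row space = alpha_1 *)
Definition alpha1mx (R : realType) (u : 'cV[R]_4) : 'M[R]_(3, 4) :=
  \matrix_(i < 3) (iter i (@Sop R) u)^T.

Definition cosphi (R : realType) (G : 'M[R]_4) (u : 'cV[R]_4) : R :=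
  gform G u (Sop u).

Definition evec (R : realType) (G : 'M[R]_4) (u : 'cV[R]_4) (i : 'I_3) : 'cV[R]_4 :=
  let c := cosphi G u in
  match (i : nat) with
  | 0%N => u
  | 1%N => (Num.sqrt (1 - 2 * c ^+ 2))^-1 *:
             ((- c) *: u + Sop u - c *: Sop (Sop u))
  | _ => Sop (Sop u)
  end.

Definition emx (R : realType) (G : 'M[R]_4) (u : 'cV[R]_4) : 'M[R]_(3, 4) :=
  \matrix_(i < 3) (evec G u i)^T.

(* Main.v *)
Require Import Defs.
From HB Require Import structures.
From mathcomp Require Import all_boot all_order all_algebra.
From mathcomp Require Import reals ring lra.
Import Order.TTheory GRing.Theory Num.Theory.
Local Open Scope ring_scope.

Section L.
Variable R : realType.
Variable G : 'M[R]_4.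

Lemma gDl (a b c : 'cV[R]_4) : gform G (a + b) c = gform G a c + gform G b c.
Proof. by rewrite /gform linearD /= !mulmxDl mxE. Qed.
Lemma gDr (a b c : 'cV[R]_4) : gform G c (a + b) = gform G c a + gform G c b.
Proof. by rewrite /gform !mulmxDr mxE. Qed.
Lemma gZl k (a c : 'cV[R]_4) : gform G (k *: a) c = k * gform G a c.
Proof. by rewrite /gform linearZ /= -!scalemxAl mxE. Qed.
Lemma gZr k (a c : 'cV[R]_4) : gform G c (k *: a) = k * gform G c a.
Proof. by rewrite /gform -!scalemxAr mxE. Qed.
Lemma gNl (a c : 'cV[R]_4) : gform G (- a) c = - gform G a c.
Proof. by rewrite -scaleN1r gZl mulN1r. Qed.
Lemma gNr (a c : 'cV[R]_4) : gform G c (- a) = - gform G c a.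
Proof. by rewrite -scaleN1r gZr mulN1r. Qed.
Lemma gsym (a c : 'cV[R]_4) : G^T = G -> gform G a c = gform G c a.
Proof.
move=> hT; rewrite /gform -{1}hT. have -> : (a^T *m G^T *m c) = (c^T *m G *m a)^T by rewrite !trmx_mul trmxK mulmxA. 
by rewrite mxE.
Qed.
End L.

Lemma SopE (R : realType) (v : 'cV[R]_4) (i : 'I_4) :
  Sop v i 0 = if (i : nat) == 3%N then - v 0 0 else v (inord i.+1) 0.
Proof.
rewrite /Sop !mxE !big_ord_recr big_ord0 /= !mxE /=.
case: i => [[|[|[|[|i]]]] Hi] //=; rewrite ?mul0r ?mul1r ?add0r ?addr0 ?mulN1r //.
all: try (congr (v _ _); apply: val_inj; rewrite /= inordK //).
by congr (- v _ _); apply: val_inj.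



Qed.

Lemma S4 (R : realType) (v : 'cV[R]_4) : Sop (Sop (Sop (Sop v))) = - v.
Proof.
apply/matrixP => i j; rewrite ord1 SopE [RHS]mxE.
case: i => [[|[|[|[|i]]]] Hi] //=;
 rewrite ?inordK //=; repeat (rewrite SopE /= ?inordK //=).
all: by congr (- v _ _); apply: val_inj; rewrite /= ?inordK.
Qed.

Lemma vecid (R : realType) (x y z : 'cV[R]_4) (c : R) :
  (- c) *: x + y - c *: z + c *: x + c *: z = y.
Proof. by apply/matrixP => i j; rewrite !mxE; ring. Qed.

Theorem lemma4p1 (R : realType) (G : 'M[R]_4) (u : 'cV[R]_4)
  (hG : pos_def_metric G)
  (hS : forall v w : 'cV[R]_4, gform G (Sop v) (Sop w) = gform G v w)
  (hu : gform G u u = 1)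
  (hbasis : induces_Sbasis u) :
  (forall i j : 'I_3, gform G (evec G u i) (evec G u j) = (i == j)%:R) /\
  (emx G u == alpha1mx u)%MS.
Proof.
case: hG => hT hpos.
set c := cosphi G u.
set a1 := Sop u. set a2 := Sop a1. set a3 := Sop a2.
have g11 : gform G a1 a1 = 1 by rewrite hS.
have g22 : gform G a2 a2 = 1 by rewrite hS.
have g01 : gform G u a1 = c by [].
have g10 : gform G a1 u = c by rewrite gsym.
have g12 : gform G a1 a2 = c by rewrite hS.
have g21 : gform G a2 a1 = c by rewrite gsym.
have g02 : gform G u a2 = 0.
  have h1 : gform G a2 (Sop a3) = gform G u a2 by rewrite hS hS.
  have h2 : Sop a3 = - u by apply: S4.
  rewrite h2 gNr gsym // in h1.
  have : 2 * gform G u a2 = 0 by rewrite mulr2n; lra.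
  by move/eqP; rewrite mulf_eq0 pnatr_eq0 /= => /eqP.
have g20 : gform G a2 u = 0 by rewrite gsym.
set w := (- c) *: u + a1 - c *: a2.
have gww : gform G w w = 1 - 2 * c ^+ 2.
  rewrite /w !(gDl, gDr, gZl, gZr, gNl, gNr) hu g11 g22 g01 g10 g12 g21 g02 g20.
  ring.
have w0 : w != 0.
  pose x : 'rV[R]_4 := \row_(i < 4) [:: -c; 1; -c; 0]`_i.
  have hx : x *m Sframe u = w^T.
    rewrite mulmx_sum_row !big_ord_recr big_ord0 /= /Sframe !rowK !mxE /=.
    rewrite scale0r addr0 add0r scale1r /w linearB linearD /= !linearZ /=.
    by apply/matrixP => i j; rewrite !mxE; ring.


  apply/negP => /eqP hw.
  have : x *m Sframe u == 0 by rewrite hx hw trmx0.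
  rewrite mulmx_free_eq0 //.
  move/eqP/matrixP => /(_ 0 1); rewrite !mxE /=.
  by move/eqP; rewrite oner_eq0.
have s0 : 0 < 1 - 2 * c ^+ 2 by rewrite -gww hpos.
set k := (Num.sqrt (1 - 2 * c ^+ 2))^-1.
have sq0 : Num.sqrt (1 - 2 * c ^+ 2) != 0 by rewrite gt_eqF // sqrtr_gt0.
have kk : k * k * (1 - 2 * c ^+ 2) = 1.
  rewrite /k; move: (sqr_sqrtr (ltW s0)) sq0; set q := Num.sqrt _ => hq hq0.
  by rewrite -[X in _ * X]hq; field.
have e1 : evec G u 1 = k *: w by [].
have e0 : evec G u 0 = u by [].
have e2 : evec G u 2%:R = a2 by [].
split.
  move=> i j.
  have gu : gform G u w = 0.
    by rewrite /w !(gDl, gDr, gZl, gZr, gNl, gNr) hu g01 g02; ring.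
  have ug : gform G w u = 0 by rewrite gsym.
  have g2 : gform G a2 w = 0.
    by rewrite /w !(gDl, gDr, gZl, gZr, gNl, gNr) g22 g21 g20; ring.
  have g2' : gform G w a2 = 0 by rewrite gsym.
  have hi : forall i : 'I_3, i = 0 \/ i = 1 \/ i = 2%:R.
    by case=> [[|[|[|l]]] Hi] //; [left|right;left|right;right]; exact: val_inj.
  have [->|[->|->]] := hi i; have [->|[->|->]] := hi j;
    rewrite ?e0 ?e1 ?e2 ?gZl ?gZr /= ?hu ?g22 ?gu ?ug ?g2 ?g2' ?g02 ?g20 ?gww ?mulr0 //.
  by rewrite mulrA kk.
have r0 : row 0 (alpha1mx u) = u^T by rewrite rowK.
have r1 : row 1 (alpha1mx u) = a1^T by rewrite rowK.
have r2 : row 2%:R (alpha1mx u) = a2^T by rewrite rowK.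
have q0 : row 0 (emx G u) = u^T by rewrite rowK.
have q1 : row 1 (emx G u) = (k *: w)^T by rewrite rowK.
have q2 : row 2%:R (emx G u) = a2^T by rewrite rowK.
have hi : forall i : 'I_3, i = 0 \/ i = 1 \/ i = 2%:R.
  by case=> [[|[|[|l]]] Hi] //; [left|right;left|right;right]; exact: val_inj.
apply/andP; split; apply/row_subP => i; have [->|[->|->]] := hi i.
- by rewrite q0 -r0 row_sub.
- rewrite q1.
  have -> : w = (-c)*:u + a1 + (-c)*:a2 by rewrite /w !scaleNr.
  rewrite linearZ /=; apply: scalemx_sub; rewrite !linearD /= !linearZ /=.
  rewrite -r0 -r1 -r2.
  by rewrite !addmx_sub // ?scalemx_sub // row_sub.
- by rewrite q2 -r2 row_sub.
- by rewrite r0 -q0 row_sub.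
- rewrite r1.
  move: q1; set e := k *: w => q1.
  have -> : a1 = Num.sqrt (1 - 2 * c ^+ 2) *: e + c *: u + c *: a2.
    by rewrite /e scalerA /k mulfV // scale1r /w vecid.
  rewrite !linearD /= !linearZ /=.
  have -> : k *: w^T = (k *: w)^T by rewrite linearZ.
  rewrite -q0 -q1 -q2.
  by rewrite !addmx_sub // ?scalemx_sub // row_sub.
- by rewrite r2 -q2 row_sub.
Qed.
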